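(* Let $X,Y$ be countable discrete metric spaces and $d,d'\in D(X,Y)$. Consider the conditions: (i) $d$ and $d'$ are coarsely equivalent, i.e. there is a nondecreasing function $\varphi:[0,\infty)\to[0,\infty)$ with $d'(x,y)\le\varphi(d(x,y))$ and $d(x,y)\le\varphi(d'(x,y))$ for all $x\in X$, $y\in Y$; (ii) $M_{d'}(X,Y)=M_d(X,Y)$. Then (i) implies (ii). If moreover $X$ and $Y$ are uniformly discrete ($\inf_{x\ne x'}d_X(x,x')>0$, similarly for $Y$) and proper (every ball contains finitely many points), then (ii) implies (i).
   Context: $H_X=l^2(X)$ with basis $\{\delta_x\}$. $D(X,Y)$ is the set of metrics on $X\sqcup Y$ restricting to $d_X$ and $d_Y$. For $T:H_X\to H_Y$ bounded, $T_{yx}=\langle T\delta_x,\delta_y\rangle$; $T$ has propagation less than $L$ w.r.t. $d$ if $T_{yx}=0$ whenever $d(x,y)\ge L$. $M_d(X,Y)$ is the norm closure in $\mathbb B(H_X,H_Y)$ of the bounded operators of finite propagation w.r.t. $d$. *)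

(* Defs.v *)
From Stdlib Require Import Reals List ClassicalEpsilon.
Import ListNotations.
Open Scope R_scope.

Definition C : Type := (R * R)%type.
Definition C0 : C := (0, 0).
Definition C1 : C := (1, 0).
Definition Cadd (z w : C) : C := (fst z + fst w, snd z + snd w).
Definition Csub (z w : C) : C := (fst z - fst w, snd z - snd w).
Definition Cmul (z w : C) : C :=
  (fst z * fst w - snd z * snd w, fst z * snd w + snd z * fst w).
Definition Cnorm2 (z : C) : R := fst z * fst z + snd z * snd z.

Definition is_metric {T : Type} (d : T -> T -> R) : Prop :=
  (forall a b, 0 <= d a b) /\
  (forall a b, d a b = 0 <-> a = b) /\
  (forall a b, d a b = d b a) /\
  (forall a b c, d a c <= d a b + d b c).

Definition countable (T : Type) : Prop := exists f : T -> nat, forall a b, f a = f b -> a = b.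

Definition discrete_metric {T : Type} (d : T -> T -> R) : Prop :=
  forall x, exists e, 0 < e /\ forall x', d x x' < e -> x' = x.

Definition uniformly_discrete {T : Type} (d : T -> T -> R) : Prop :=
  exists c, 0 < c /\ forall x x', x <> x' -> c <= d x x'.

Definition proper_metric {T : Type} (d : T -> T -> R) : Prop :=
  forall x r, exists l : list T, forall x', d x x' <= r -> In x' l.

Definition in_D {X Y : Type} (dX : X -> X -> R) (dY : Y -> Y -> R)
  (d : (X + Y) -> (X + Y) -> R) : Prop :=
  is_metric d /\
  (forall x x', d (inl x) (inl x') = dX x x') /\
  (forall y y', d (inr y) (inr y') = dY y y').

Definition coarsely_equivalent {X Y : Type} (d d' : (X + Y) -> (X + Y) -> R) : Prop :=
  exists phi : R -> R,
    (forall t, 0 <= t -> 0 <= phi t) /\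
    (forall s t, 0 <= s -> s <= t -> phi s <= phi t) /\
    (forall x y, d' (inl x) (inr y) <= phi (d (inl x) (inr y))) /\
    (forall x y, d (inl x) (inr y) <= phi (d' (inl x) (inr y))).

Fixpoint sumsq {T : Type} (f : T -> C) (l : list T) : R :=
  match l with
  | [] => 0
  | a :: l' => Cnorm2 (f a) + sumsq f l'
  end.

Definition l2 {T : Type} (f : T -> C) : Prop :=
  exists B, forall l : list T, NoDup l -> sumsq f l <= B.

(** ||g|| <= c ||f|| : every finite partial sum of |g|^2 is at most c^2 times
    every upper bound of the finite partial sums of |f|^2 (i.e. c^2 ||f||^2) *)
Definition norm_le {S T : Type} (g : T -> C) (c : R) (f : S -> C) : Prop :=
  forall l : list T, NoDup l ->
  forall B, (forall l' : list S, NoDup l' -> sumsq f l' <= B) ->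
  sumsq g l <= c * c * B.

Definition Op (X Y : Type) : Type := (X -> C) -> (Y -> C).

Definition linear_on_l2 {X Y : Type} (T : Op X Y) : Prop :=
  forall (a : C) (f g : X -> C), l2 f -> l2 g ->
  forall y, T (fun x => Cadd (Cmul a (f x)) (g x)) y = Cadd (Cmul a (T f y)) (T g y).

Definition bounded_op {X Y : Type} (T : Op X Y) : Prop :=
  linear_on_l2 T /\ exists c, 0 <= c /\ forall f, l2 f -> norm_le (T f) c f.

Definition delta {X : Type} (x : X) : X -> C :=
  fun x' => if excluded_middle_informative (x' = x) then C1 else C0.

(** matrix coefficient T_{yx} = <T δ_x, δ_y> = (T δ_x)(y) *)
Definition coef {X Y : Type} (T : Op X Y) (y : Y) (x : X) : C := T (delta x) y.

Definition finite_propagation {X Y : Type} (d : (X + Y) -> (X + Y) -> R) (T : Op X Y) : Prop :=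
  exists L, forall x y, L <= d (inl x) (inr y) -> coef T y x = C0.

Definition in_M {X Y : Type} (d : (X + Y) -> (X + Y) -> R) (T : Op X Y) : Prop :=
  bounded_op T /\
  forall eps, 0 < eps ->
    exists S : Op X Y, bounded_op S /\ finite_propagation d S /\
      forall f, l2 f -> norm_le (fun y => Csub (T f y) (S f y)) eps f.

Definition M_equal {X Y : Type} (d d' : (X + Y) -> (X + Y) -> R) : Prop :=
  forall T : Op X Y, in_M d' T <-> in_M d T.

(* Main.v *)
Require Import Defs.
From Stdlib Require Import Reals Lra Lia List Classical ClassicalEpsilon ZArith.
Import ListNotations.
Open Scope R_scope.

Definition nup (t : R) : nat := Z.to_nat (up t).

Lemma nup_gt t : t < INR (nup t).
Proof.
  unfold nup. destruct (archimed t) as [H1 H2].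
  destruct (Z_lt_le_dec (up t) 0) as [Hz|Hz].
  - replace (Z.to_nat (up t)) with 0%nat by lia. simpl. apply IZR_lt in Hz. lra.
  - rewrite INR_IZR_INZ, Z2Nat.id by lia. lra.
Qed.

Lemma up_mono s t : s <= t -> (up s <= up t)%Z.
Proof.
  intros H. destruct (archimed s), (archimed t).
  destruct (Z_le_gt_dec (up s) (up t)) as [|Hg]; auto.
  assert (Hz : (up t <= up s - 1)%Z) by lia. apply IZR_le in Hz.
  rewrite minus_IZR in Hz. lra.
Qed.

Lemma nup_mono s t : s <= t -> (nup s <= nup t)%nat.
Proof. intros H. unfold nup. pose proof (up_mono s t H). lia. Qed.

Lemma sumsq_zero {T} (g : T -> Defs.C) l : (forall y, Cnorm2 (g y) = 0) -> sumsq g l = 0.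
Proof. intros H; induction l; simpl; auto. rewrite H, IHl; lra. Qed.

Lemma Cnorm2_C0 : Cnorm2 C0 = 0.
Proof. unfold Cnorm2, C0; simpl; lra. Qed.

Lemma sumsq_delta {T} (x : T) l : NoDup l ->
  sumsq (delta x) l <= 1 /\ (~ In x l -> sumsq (delta x) l = 0).
Proof.
  induction 1 as [|a l Ha Hl IH]; simpl.
  - split; [lra| auto].
  - destruct IH as [IH1 IH2].
    destruct (excluded_middle_informative (a = x)) as [e|n].
    + subst. assert (E : delta x x = Defs.C1) by (unfold delta; destruct (excluded_middle_informative (x = x)); tauto).
      rewrite E, (IH2 Ha). unfold Cnorm2, Defs.C1; simpl. split; [lra|].
      intros Hn; exfalso; apply Hn; auto.
    + assert (E : delta x a = C0) by (unfold delta; destruct (excluded_middle_informative (a = x)); tauto).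
      rewrite E, Cnorm2_C0. split; [lra|]. intros Hn. rewrite IH2. lra.
      intros Hi; apply Hn; auto.
Qed.

Lemma delta_l2 {T} (x : T) : l2 (delta x).
Proof. exists 1. intros l Hl. apply (sumsq_delta x l Hl). Qed.

Section Key.
Variables (X Y : Type) (dX : X -> X -> R) (dY : Y -> Y -> R)
  (d d' : (X + Y) -> (X + Y) -> R)
  (Hd : in_D dX dY d) (Hd' : in_D dX dY d') (R0 : R)
  (Hunb : forall B, exists x y, d (inl x) (inr y) <= R0 /\ B < d' (inl x) (inr y)).

Definition pp (B : R) : X * Y :=
  let H := Hunb B in
  let (x, Hx) := constructive_indefinite_description _ H in
  let (y, _) := constructive_indefinite_description _ Hx in (x, y).

Lemma pp_spec B : d (inl (fst (pp B))) (inr (snd (pp B))) <= R0 /\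
   B < d' (inl (fst (pp B))) (inr (snd (pp B))).
Proof.
  unfold pp. destruct (constructive_indefinite_description _ (Hunb B)) as [x Hx].
  destruct (constructive_indefinite_description _ Hx) as [y Hy]. simpl. exact Hy.
Qed.

Definition DD (p : X * Y) := d' (inl (fst p)) (inr (snd p)).

Fixpoint aa (k : nat) : X * Y :=
  match k with
  | O => pp 0
  | S k => pp (DD (aa k) + 2 * R0 + 1)
  end.

Definition xs k := fst (aa k).
Definition ys k := snd (aa k).

Lemma aa_d k : d (inl (xs k)) (inr (ys k)) <= R0.
Proof. unfold xs, ys; destruct k; apply pp_spec. Qed.

Lemma R0_nonneg : 0 <= R0.
Proof.
  destruct Hd as [[H0 _] _]. pose proof (aa_d 0). pose proof (H0 (inl (xs 0)) (inr (ys 0))). lra.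
Qed.

Lemma aa_step k : DD (aa k) + 2 * R0 + 1 < DD (aa (S k)).
Proof. simpl. apply pp_spec. Qed.

Lemma aa_incr j k : (j < k)%nat -> DD (aa j) + 2 * R0 + 1 < DD (aa k).
Proof.
  induction 1.
  - apply aa_step.
  - pose proof (aa_step m). pose proof R0_nonneg. lra.
Qed.

Lemma aa_big k : INR k < DD (aa k).
Proof.
  pose proof R0_nonneg. induction k.
  - simpl. pose proof (pp_spec 0). unfold DD. lra.
  - rewrite S_INR. pose proof (aa_step k). lra.
Qed.

Lemma xs_inj_lt j k : (j < k)%nat -> xs j <> xs k.
Proof.
  intros Hjk He. pose proof (aa_incr j k Hjk) as Hi. unfold DD in Hi.
  destruct Hd as [[_ [_ [Hs Ht]]] [_ HY]].
  destruct Hd' as [[_ [_ [Hs' Ht']]] [_ HY']].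
  pose proof (aa_d j). pose proof (aa_d k). fold (xs j) (xs k) (ys j) (ys k) in Hi.
  pose proof (Ht' (inl (xs j)) (inr (ys j)) (inr (ys k))).
  rewrite HY' in H1. rewrite <- (HY (ys j)) in H1.
  pose proof (Ht (inr (ys j)) (inl (xs j)) (inr (ys k))).
  rewrite (Hs (inr (ys j)) (inl _)) in H2. rewrite He in *. lra.
Qed.

Lemma ys_inj_lt j k : (j < k)%nat -> ys j <> ys k.
Proof.
  intros Hjk He. pose proof (aa_incr j k Hjk) as Hi. unfold DD in Hi.
  destruct Hd as [[_ [_ [Hs Ht]]] [HX _]].
  destruct Hd' as [[_ [_ [Hs' Ht']]] [HX' _]].
  pose proof (aa_d j). pose proof (aa_d k). fold (xs j) (xs k) (ys j) (ys k) in Hi.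
  pose proof (Ht' (inl (xs k)) (inl (xs j)) (inr (ys j))).
  rewrite HX' in H1. rewrite <- (HX (xs k)) in H1.
  pose proof (Ht (inl (xs k)) (inr (ys k)) (inl (xs j))).
  rewrite (Hs (inr (ys k)) (inl _)) in H2. rewrite He in *. lra.
Qed.

Lemma xs_inj j k : xs j = xs k -> j = k.
Proof.
  intros H. destruct (lt_eq_lt_dec j k) as [[h|h]|h]; auto.
  - exfalso; exact (xs_inj_lt _ _ h H).
  - exfalso; exact (xs_inj_lt _ _ h (eq_sym H)).
Qed.

Lemma ys_inj j k : ys j = ys k -> j = k.
Proof.
  intros H. destruct (lt_eq_lt_dec j k) as [[h|h]|h]; auto.
  - exfalso; exact (ys_inj_lt _ _ h H).
  - exfalso; exact (ys_inj_lt _ _ h (eq_sym H)).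
Qed.

Definition TT : Op X Y := fun f y =>
  match excluded_middle_informative (exists k, ys k = y) with
  | left H => f (xs (proj1_sig (constructive_indefinite_description _ H)))
  | right _ => C0
  end.

Lemma TT_at f k : TT f (ys k) = f (xs k).
Proof.
  unfold TT. destruct (excluded_middle_informative _) as [H|H].
  - destruct (constructive_indefinite_description _ H) as [k' Hk']. simpl.
    apply ys_inj in Hk'. subst. reflexivity.
  - exfalso; apply H; eauto.
Qed.

Lemma TT_off f y : ~ (exists k, ys k = y) -> TT f y = C0.
Proof.
  intros Hn. unfold TT. destruct (excluded_middle_informative _) as [H|H]; tauto.
Qed.

Lemma TT_sumsq f l : NoDup l -> exists l', NoDup l' /\
  (forall x, In x l' -> exists k, xs k = x /\ In (ys k) l) /\ sumsq (TT f) l = sumsq f l'.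
Proof.
  induction 1 as [|y l Hy Hl IH].
  - exists []. simpl. repeat split; auto. constructor. tauto.
  - destruct IH as [l' [H1 [H2 H3]]].
    destruct (classic (exists k, ys k = y)) as [[k Hk]|Hn].
    + exists (xs k :: l'). split; [|split].
      * constructor; auto. intros Hi. destruct (H2 _ Hi) as [k' [E Hin]].
        apply xs_inj in E. subst. tauto.
      * intros x [E|Hi]. exists k; split; auto; subst; simpl; auto.
        destruct (H2 _ Hi) as [k' [E Hin]]. exists k'; simpl; auto.
      * simpl. rewrite H3. subst. rewrite TT_at. reflexivity.
    + exists l'. split; [|split]; auto.
      * intros x Hi. destruct (H2 _ Hi) as [k' [E Hin]]. exists k'; simpl; auto.
      * simpl. rewrite TT_off, Cnorm2_C0, H3 by auto. lra.
Qed.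

Lemma TT_bounded : bounded_op TT.
Proof.
  split.
  - intros a f g _ _ y. unfold TT. destruct (excluded_middle_informative _); auto.
    unfold Cadd, Cmul, C0; simpl. f_equal; ring.
  - exists 1. split; [lra|]. intros f _ l Hl B HB.
    destruct (TT_sumsq f l Hl) as [l' [H1 [_ H3]]]. rewrite H3.
    specialize (HB l' H1). lra.
Qed.

Lemma TT_in_M : in_M d TT.
Proof.
  split; [apply TT_bounded|]. intros eps Heps. exists TT. split; [apply TT_bounded|].
  split.
  - exists (R0 + 1). intros x y Hxy. unfold coef.
    destruct (classic (exists k, ys k = y)) as [[k Hk]|Hn].
    + subst. rewrite TT_at. unfold delta.
      destruct (excluded_middle_informative (xs k = x)); auto.
      subst. pose proof (aa_d k). lra.
    + apply TT_off; auto.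
  - intros f _ l Hl B HB. rewrite sumsq_zero.
    + specialize (HB [] (NoDup_nil _)). simpl in HB. nra.
    + intros y. unfold Cnorm2, Csub; simpl. ring.
Qed.

Lemma TT_not_in_M : ~ in_M d' TT.
Proof.
  intros [_ H]. destruct (H (1/2)) as [S [_ [[L HL] HN]]]; [lra|].
  pose (k := nup L). pose proof (nup_gt L). pose proof (aa_big k).
  assert (Hc : coef S (ys k) (xs k) = C0).
  { apply HL. unfold DD in H1. fold (xs k) (ys k) in H1. fold k in H0. lra. }
  specialize (HN (delta (xs k)) (delta_l2 _) [ys k]).
  assert (HND : NoDup [ys k]) by (constructor; [simpl; tauto| constructor]).
  specialize (HN HND 1 (fun l' Hl' => proj1 (sumsq_delta (xs k) l' Hl'))).
  simpl in HN. rewrite TT_at in HN. unfold coef in Hc. rewrite Hc in HN.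
  unfold delta in HN. destruct (excluded_middle_informative (xs k = xs k)); [|tauto].
  unfold Cnorm2, Csub, Defs.C1, C0 in HN; simpl in HN. lra.
Qed.

End Key.

Lemma fp_transfer {X Y} (d d' : (X + Y) -> (X + Y) -> R) (phi : R -> R) S :
  (forall a b, 0 <= d a b) ->
  (forall s t, 0 <= s -> s <= t -> phi s <= phi t) ->
  (forall x y, d' (inl x) (inr y) <= phi (d (inl x) (inr y))) ->
  finite_propagation d S -> finite_propagation d' S.
Proof.
  intros H0 Hm Hp [L HL]. exists (phi (Rmax L 0) + 1). intros x y Hxy.
  destruct (Rle_lt_dec L (d (inl x) (inr y))) as [h|h]; auto.
  exfalso. pose proof (H0 (inl x) (inr y)).
  pose proof (Hm (d (inl x) (inr y)) (Rmax L 0) H (Rlt_le _ _ (Rlt_le_trans _ _ _ h (Rmax_l _ _)))).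
  pose proof (Hp x y). lra.
Qed.

Lemma M_transfer {X Y} (d d' : (X + Y) -> (X + Y) -> R) (phi : R -> R) T :
  (forall a b, 0 <= d a b) ->
  (forall s t, 0 <= s -> s <= t -> phi s <= phi t) ->
  (forall x y, d' (inl x) (inr y) <= phi (d (inl x) (inr y))) ->
  in_M d T -> in_M d' T.
Proof.
  intros H0 Hm Hp [Hb H]. split; auto. intros eps He.
  destruct (H eps He) as [S [HS1 [HS2 HS3]]]. exists S. split; auto. split; auto.
  eapply fp_transfer; eauto.
Qed.

Lemma unb_of_not {X Y} (d d' : (X + Y) -> (X + Y) -> R) :
  ~ (forall n : nat, exists B, forall x y, d (inl x) (inr y) <= INR n -> d' (inl x) (inr y) <= B) ->
  exists R0, forall B, exists x y, d (inl x) (inr y) <= R0 /\ B < d' (inl x) (inr y).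
Proof.
  intros H. apply not_all_ex_not in H. destruct H as [n Hn]. exists (INR n).
  intros B. apply NNPP. intros Hc. apply Hn. exists B. intros x y Hxy.
  apply Rnot_lt_le. intros Hl. apply Hc. exists x, y. auto.
Qed.

Definition bnd {X Y} (d d' : (X + Y) -> (X + Y) -> R)
  (H : forall n : nat, exists B, forall x y, d (inl x) (inr y) <= INR n -> d' (inl x) (inr y) <= B)
  (n : nat) : R := proj1_sig (constructive_indefinite_description _ (H n)).

Lemma bnd_spec {X Y} d d' H n : forall x y, d (inl x) (inr y) <= INR n ->
  d' (inl x) (inr y) <= @bnd X Y d d' H n.
Proof. unfold bnd. destruct (constructive_indefinite_description _ (H n)); auto. Qed.

Fixpoint Phi (b c : nat -> R) (n : nat) : R :=
  match n with
  | O => Rmax 0 (Rmax (b O) (c O))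
  | S n => Rmax (Phi b c n) (Rmax (b (S n)) (c (S n)))
  end.

Lemma Phi_ge b c n : 0 <= Phi b c n /\ b n <= Phi b c n /\ c n <= Phi b c n.
Proof.
  destruct n as [|n]; simpl.
  - pose proof (Rmax_l 0 (Rmax (b 0%nat) (c 0%nat))).
    pose proof (Rmax_r 0 (Rmax (b 0%nat) (c 0%nat))).
    pose proof (Rmax_l (b 0%nat) (c 0%nat)). pose proof (Rmax_r (b 0%nat) (c 0%nat)). lra.
  - assert (H0 : 0 <= Phi b c n).
    { induction n; simpl.
      - apply Rmax_l.
      - eapply Rle_trans; [exact IHn| apply Rmax_l]. }
    pose proof (Rmax_l (Phi b c n) (Rmax (b (S n)) (c (S n)))).
    pose proof (Rmax_r (Phi b c n) (Rmax (b (S n)) (c (S n)))).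
    pose proof (Rmax_l (b (S n)) (c (S n))). pose proof (Rmax_r (b (S n)) (c (S n))). lra.
Qed.

Lemma Phi_mono b c m n : (m <= n)%nat -> Phi b c m <= Phi b c n.
Proof.
  induction 1; [lra|]. simpl. eapply Rle_trans; [exact IHle| apply Rmax_l].
Qed.

Theorem mainTheorem4 (X Y : Type) (dX : X -> X -> R) (dY : Y -> Y -> R)
  (HXc : countable X) (HYc : countable Y)
  (HXm : is_metric dX) (HYm : is_metric dY)
  (HXd : discrete_metric dX) (HYd : discrete_metric dY)
  (d d' : (X + Y) -> (X + Y) -> R)
  (Hd : in_D dX dY d) (Hd' : in_D dX dY d') :
  (coarsely_equivalent d d' -> M_equal d d') /\
  (uniformly_discrete dX -> uniformly_discrete dY ->
   proper_metric dX -> proper_metric dY ->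
   M_equal d d' -> coarsely_equivalent d d').
Proof.
  pose proof Hd as [[Hd0 _] _]. pose proof Hd' as [[Hd0' _] _].
  split.
  - intros [phi [Hp0 [Hm [H1 H2]]]] T. split.
    + apply M_transfer with phi; auto.
    + apply M_transfer with phi; auto.
  - intros _ _ _ _ HM.
    destruct (classic (forall n : nat, exists B, forall x y,
       d (inl x) (inr y) <= INR n -> d' (inl x) (inr y) <= B)) as [HA|HA];
    [destruct (classic (forall n : nat, exists B, forall x y,
       d' (inl x) (inr y) <= INR n -> d (inl x) (inr y) <= B)) as [HB|HB]|].
    + set (b := bnd d d' HA). set (c := bnd d' d HB).
      exists (fun t => Phi b c (nup t)). split; [|split; [|split]].
      * intros t _. apply Phi_ge.
      * intros s t _ Hst. apply Phi_mono, nup_mono; auto.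
      * intros x y. pose proof (Phi_ge b c (nup (d (inl x) (inr y)))).
        pose proof (bnd_spec d d' HA (nup (d (inl x) (inr y))) x y
          (Rlt_le _ _ (nup_gt _))). fold b in H0. lra.
      * intros x y. pose proof (Phi_ge b c (nup (d' (inl x) (inr y)))).
        pose proof (bnd_spec d' d HB (nup (d' (inl x) (inr y))) x y
          (Rlt_le _ _ (nup_gt _))). fold c in H0. lra.
    + exfalso. destruct (unb_of_not d' d HB) as [R0 HR].
      apply (TT_not_in_M X Y dX dY d' d Hd' Hd R0 HR).
      apply (proj1 (HM _)). apply (TT_in_M X Y dX dY d' d Hd' Hd R0 HR).
    + exfalso. destruct (unb_of_not d d' HA) as [R0 HR].
      apply (TT_not_in_M X Y dX dY d d' Hd Hd' R0 HR).
      apply (proj2 (HM _)). apply (TT_in_M X Y dX dY d d' Hd Hd' R0 HR).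
Qed.
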